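(* Let $N=\{1,\dots,n\}$ with $n\ge 2$ and let $\mathcal{D}=\mathbb{R}^n_+$ be the domain of profiles of inflows. A rule $R:\mathcal{D}\to\mathbb{R}^n_+$ satisfies scale invariance, downstream impartiality, upstream invariance, and balance if and only if it is the Shapley rule, i.e. for each $e\in\mathcal{D}$ and each $i\in N$, $$R_i(e)=\sum_{j\le i}\frac{e_j}{n-j+1}.$$
   Context: Agents $1,\dots,n$ are located along a linear river, lower index meaning more upstream; agent $i$ has river inflow $e_i\ge 0$, and $e=(e_1,\dots,e_n)\in\mathcal{D}=\mathbb{R}^n_+$. An allocation for $e$ is $x\in\mathbb{R}^n_+$ with $\sum_{i=1}^n x_i=\sum_{i=1}^n e_i$ and $\sum_{i=1}^k x_i\le\sum_{i=1}^k e_i$ for each $k=1,\dots,n-1$. A rule is a map $R:\mathcal{D}\to\mathbb{R}^n_+$ assigning to each $e$ an allocation $R(e)$ for $e$. Axioms: Scale invariance: for each $e\in\mathcal{D}$ and each $\gamma\in\mathbb{R}_+$, $R(\gamma e)=\gamma R(e)$. Upstream invariance: for each $e,e'\in\mathcal{D}$ such that $e_i<e'_i$ for some $i\in N$ and $e_j=e'_j$ for all $j\ne i$, we have $R_k(e)=R_k(e')$ for each $k<i$. Downstream impartiality: for each $e,e'\in\mathcal{D}$ such that $e_i<e'_i$ for some $i\in N$ and $e_j=e'_j$ for all $j\ne i$, and for each $k,l>i$ with $e_k=e_l$, we have $R_k(e')-R_k(e)=R_l(e')-R_l(e)$. Balance: for each $e\in\mathcal{D}$ such that $e_i>0$ for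 some $i\in\{1,\dots,n-1\}$ and $e_j=0$ for all $j\ne i$, $R_i(e)=\frac{1}{n-i}\sum_{k>i}R_k(e)$. *)

(* Defs.v *)
From HB Require Import structures.
From mathcomp Require Import all_boot all_order all_algebra.
From mathcomp Require Import reals.
Set Implicit Arguments. Unset Strict Implicit. Unset Printing Implicit Defensive.
Import Order.TTheory GRing.Theory Num.Theory.
Local Open Scope ring_scope.

(* Agents are indexed 0..n-1 (agent i here is agent i+1 of the paper);
   lower index = more upstream. A profile is a function 'I_n -> R. *)

Section River.
Variables (R : realType) (n : nat).

Definition profile := 'I_n -> R.

Definition inD (e : profile) : Prop := forall i, 0 <= e i.

Definition allocation (e x : profile) : Prop :=
  (forall i, 0 <= x i) /\
  \sum_(i < n) x i = \sum_(i < n) e i /\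
  (forall k : nat, (k < n.-1)%N ->
     \sum_(i < n | (i <= k)%N) x i <= \sum_(i < n | (i <= k)%N) e i).

Definition is_rule (Rl : profile -> profile) : Prop :=
  forall e, inD e -> allocation e (Rl e).

Definition scale_invariance (Rl : profile -> profile) : Prop :=
  forall e, inD e -> forall g : R, 0 <= g ->
    forall i, Rl (fun j => g * e j) i = g * Rl e i.

Definition increase_at (e e' : profile) (i : 'I_n) : Prop :=
  e i < e' i /\ forall j, j != i -> e j = e' j.

Definition upstream_invariance (Rl : profile -> profile) : Prop :=
  forall e e', inD e -> inD e' -> forall i, increase_at e e' i ->
    forall k : 'I_n, (k < i)%N -> Rl e k = Rl e' k.

Definition downstream_impartiality (Rl : profile -> profile) : Prop :=
  forall e e', inD e -> inD e' -> forall i, increase_at e e' i ->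
    forall k l : 'I_n, (i < k)%N -> (i < l)%N -> e k = e l ->
      Rl e' k - Rl e k = Rl e' l - Rl e l.

(* paper index i (1-based) in {1..n-1} is 0-based i < n-1; n - i (paper)
   becomes n - (i+1) here; agents k > i. *)
Definition balance (Rl : profile -> profile) : Prop :=
  forall e, inD e -> forall i : 'I_n, (i < n.-1)%N -> 0 < e i ->
    (forall j, j != i -> e j = 0) ->
    Rl e i = (n - i.+1)%:R^-1 * \sum_(k < n | (i < k)%N) Rl e k.

(* Shapley rule: paper R_i(e) = sum_{j<=i} e_j/(n-j+1) (1-based);
   0-based: sum_{j<=i} e_j/(n-j). *)
Definition shapley (e : profile) (i : 'I_n) : R :=
  \sum_(j < n | (j <= i)%N) e j / (n - j)%:R.

End River.

(* Main.v *)
Require Import Defs.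
From HB Require Import structures.
From mathcomp Require Import all_boot all_order all_algebra.
From mathcomp Require Import reals.
From mathcomp Require Import zify ring lra.
From Stdlib Require Import FunctionalExtensionality.
Import Order.TTheory GRing.Theory Num.Theory.
Local Open Scope ring_scope.

Section Aux.
Variables (R : realType) (n : nat).

Lemma natr_sub_neq0 (i : 'I_n) : (n - i)%:R != 0 :> R.
Proof. rewrite pnatr_eq0 subn_eq0 -ltnNge; exact: ltn_ord. Qed.

Lemma split_le (F : 'I_n -> R) (j : 'I_n) :
  \sum_(k < n | (k <= j)%N) F k = \sum_(k < n | (k < j)%N) F k + F j.
Proof.
rewrite (bigD1 j) //= addrC; congr (_ + _); apply: eq_bigl => k.
by rewrite ltn_neqAle andbC.
Qed.

Lemma cnt (i : nat) (c : R) : (i <= n)%N ->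
  \sum_(k < n | (i <= k)%N) c = c *+ (n - i).
Proof.
move=> hi; rewrite -sumr_const_nat big_geq_mkord.
by apply: eq_bigl => k.
Qed.

Lemma sum_single (i : 'I_n) (c : R) :
  \sum_(j < n) (if j == i then c else 0) = c.
Proof. by rewrite -big_mkcond big_pred1_eq. Qed.

Lemma ident (e : profile R n) : forall i (hi : (i < n)%N),
  \sum_(k < n | (k < i)%N) shapley e k + (n - i)%:R * shapley e (Ordinal hi)
  = \sum_(k < n | (k <= i)%N) e k.
Proof.
elim=> [|i IH] hi.
  have -> : \sum_(k < n | (k < 0)%N) shapley e k = 0 by rewrite big_pred0.
  rewrite add0r /shapley.
  rewrite (split_le _ (Ordinal hi)) (split_le _ (Ordinal hi)) /= !big_pred0 // !add0r.
  by rewrite subn0 mulrC divfK // pnatr_eq0 -lt0n.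
have hi' : (i < n)%N by apply: ltnW.
have E1 : \sum_(k < n | (k < i.+1)%N) shapley e k =
   \sum_(k < n | (k < i)%N) shapley e k + shapley e (Ordinal hi').
  rewrite -(split_le (shapley e) (Ordinal hi')).
  by [].
have E2 : shapley e (Ordinal hi) = shapley e (Ordinal hi') + e (Ordinal hi) / (n - i.+1)%:R.
  by rewrite /shapley (split_le _ (Ordinal hi)) /=.
have E3 : \sum_(k < n | (k <= i.+1)%N) e k = \sum_(k < n | (k <= i)%N) e k + e (Ordinal hi).
  by rewrite (split_le _ (Ordinal hi)) /=.
rewrite E1 E2 E3 -(IH hi') mulrDr.
have hne : (n - i.+1)%:R != 0 :> R := natr_sub_neq0 (Ordinal hi).
rewrite [_ * (_ / _)]mulrC divfK //.
have Hm : (n - i)%:R = (n - i.+1)%:R + 1 :> R.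
  by rewrite natr1; congr (_%:R); lia.
rewrite Hm; ring.
Qed.

End Aux.
Arguments ident {R n}. Arguments split_le {R n}. Arguments cnt {R n}.
Arguments natr_sub_neq0 {R n}. Arguments sum_single {R n}.

Section Forward.
Variables (R : realType) (n : nat) (Rl : profile R n -> profile R n).
Hypotheses (hR : is_rule Rl) (UI : upstream_invariance Rl)
  (DI : downstream_impartiality Rl) (BAL : balance Rl).

Lemma eqprof (e e' : profile R n) : e =1 e' -> Rl e = Rl e'.
Proof. by move=> H; rewrite (functional_extensionality _ _ H). Qed.
Arguments eqprof {e e'}.

Lemma UI1 (e e' : profile R n) (p : 'I_n) : inD e -> inD e' ->
  (forall j, j != p -> e j = e' j) -> forall k : 'I_n, (k < p)%N -> Rl e k = Rl e' k.
Proof.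
move=> He He' Hj k hk; case: (ltgtP (e p) (e' p)) => Hp.
- exact: (UI _ _ He He' p (conj Hp Hj) k hk).
- by symmetry; apply: (UI _ _ He' He p _ k hk); split => // j /Hj.
- by rewrite (@eqprof e e') // => j; case: (eqVneq j p) => [->|/Hj].
Qed.

Lemma DI1 (e e' : profile R n) (p : 'I_n) : inD e -> inD e' ->
  (forall j, j != p -> e j = e' j) -> forall k l : 'I_n, (p < k)%N -> (p < l)%N ->
  e k = e l -> Rl e' k - Rl e k = Rl e' l - Rl e l.
Proof.
move=> He He' Hj k l hk hl hkl; case: (ltgtP (e p) (e' p)) => Hp.
- exact: (DI _ _ He He' p (conj Hp Hj) k l hk hl hkl).
- have Hj' : forall j, j != p -> e' j = e j by move=> j /Hj.
  have kp : k != p by apply/negP => /eqP E; rewrite E ltnn in hk.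
  have lp : l != p by apply/negP => /eqP E; rewrite E ltnn in hl.
  have := DI _ _ He' He p (conj Hp Hj') k l hk hl; rewrite -(Hj _ kp) -(Hj _ lp) => /(_ hkl) H.
  by apply: oppr_inj; rewrite !opprB.
- by rewrite (@eqprof e e') ?subrr // => j; case: (eqVneq j p) => [->|/Hj].
Qed.

Definition mix (m : nat) (e e' : profile R n) : profile R n :=
  fun j => if (j < m)%N then e' j else e j.

Lemma mix_inD m e e' : inD e -> inD e' -> inD (mix m e e').
Proof. by move=> He He' j; rewrite /mix; case: ifP. Qed.

Lemma mix0 e e' : mix 0 e e' =1 e.
Proof. by move=> j; rewrite /mix ltn0. Qed.

Lemma mixn e e' : mix n e e' =1 e'.
Proof. by move=> j; rewrite /mix ltn_ord. Qed.

Lemma mixS m (hm : (m < n)%N) e e' :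
  forall j, j != Ordinal hm -> mix m e e' j = mix m.+1 e e' j.
Proof.
move=> j hj; rewrite /mix (ltnS j m) (leq_eqVlt j m).
case: eqP => //= E; exfalso; move/negP: hj; apply; apply/eqP; exact: val_inj.
Qed.

Lemma mix_ge m e e' (j : 'I_n) : (m <= j)%N -> mix m e e' j = e j.
Proof. by rewrite /mix leqNgt => /negbTE ->. Qed.

Lemma mixS_eq m (hm : (m < n)%N) e e' : e (Ordinal hm) = e' (Ordinal hm) ->
  mix m e e' =1 mix m.+1 e e'.
Proof.
move=> H j; case: (eqVneq j (Ordinal hm)) => [->|/mixS //].
by rewrite /mix /= ltnn ltnSn.
Qed.

Arguments UI1 {e e' p}.
Arguments DI1 {e e' p}.
Arguments mix_inD m {e e'}.
Arguments mixS {m} hm {e e'}.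
Arguments mixS_eq {m} hm {e e'}.

Lemma lemA (e e' : profile R n) (i : nat) : inD e -> inD e' ->
  (forall j : 'I_n, (j <= i)%N -> e j = e' j) ->
  forall k : 'I_n, (k <= i)%N -> Rl e k = Rl e' k.
Proof.
move=> He He' Hj k hk.
suff H : forall m, (m <= n)%N -> Rl e k = Rl (mix m e e') k.
  by rewrite (H n (leqnn n)) (eqprof (mixn e e')).
elim=> [|m IH] hm; first by rewrite (eqprof (mix0 e e')).
have hm' : (m < n)%N by [].
rewrite (IH (ltnW hm)).
case: (ltnP i m) => him.
  apply: (UI1 (mix_inD m He He') (mix_inD m.+1 He He') (mixS hm')) => /=.
  exact: leq_ltn_trans hk him.
by rewrite (eqprof (mixS_eq hm' _)) // Hj.
Qed.

Lemma lemB (e e' : profile R n) (i : nat) : inD e -> inD e' ->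
  (forall j : 'I_n, (i <= j)%N -> e j = e' j) ->
  (forall k l : 'I_n, (i <= k)%N -> (i <= l)%N -> e k = e l) ->
  forall k l : 'I_n, (i <= k)%N -> (i <= l)%N -> Rl e' k - Rl e k = Rl e' l - Rl e l.
Proof.
move=> He He' Hj Hc k l hk hl.
suff H : forall m, (m <= n)%N -> Rl (mix m e e') k - Rl e k = Rl (mix m e e') l - Rl e l.
  by have := H n (leqnn n); rewrite (eqprof (mixn e e')).
elim=> [|m IH] hm; first by rewrite (eqprof (mix0 e e')) !subrr.
have hm' : (m < n)%N by [].
have {IH} IH := IH (ltnW hm).
case: (ltnP m i) => him.
  have hk' : (Ordinal hm' < k)%N by apply: leq_trans hk.
  have hl' : (Ordinal hm' < l)%N by apply: leq_trans hl.
  have := DI1 (mix_inD m He He') (mix_inD m.+1 He He') (mixS hm') k l hk' hl'.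
  rewrite !mix_ge ?(ltnW hk') ?(ltnW hl') // => /(_ (Hc _ _ hk hl)) H.
  lra.
by rewrite -(eqprof (mixS_eq hm' _)) // Hj.
Qed.


Definition zprof : profile R n := fun _ => 0.

Lemma inD0 : inD zprof.
Proof. by move=> j; rewrite /zprof. Qed.

Lemma Rl_zero k : Rl zprof k = 0.
Proof.
have [Hnn [Hs _]] := hR zprof inD0.
have S0 : \sum_(i < n) zprof i = 0 by rewrite big1.
rewrite S0 in Hs.
exact: (psumr_eq0P (P := xpredT) (fun i _ => Hnn i) Hs).
Qed.

Lemma ord_eq (i j : 'I_n) : (j <= i)%N -> ~~ (j < i)%N -> j = i.
Proof. move=> h1 h2; apply: val_inj => /=; lia. Qed.

Lemma split_sum (F : 'I_n -> R) (i : nat) :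
  \sum_(k < n) F k = \sum_(k < n | (k < i)%N) F k + \sum_(k < n | (i <= k)%N) F k.
Proof.
rewrite (bigID (fun k : 'I_n => (k < i)%N)) /=; congr (_ + _).
by under eq_bigl => k do rewrite -leqNgt.
Qed.

Lemma single (c : R) (i : 'I_n) : 0 <= c ->
  Rl (fun j => if j == i then c else 0) i = c / (n - i)%:R.
Proof.
move=> c0; set u := fun j => if j == i then c else 0.
have Hu : inD u by move=> j; rewrite /u; case: ifP.
case: (eqVneq c 0) => [ce|cn0].
  have -> : Rl u = Rl zprof by apply: eqprof => j; rewrite /u /zprof ce; case: ifP.
  by rewrite Rl_zero ce mul0r.
have cp : 0 < c by rewrite lt_def cn0 c0.
have Hinc : increase_at zprof u i.
  split; first by rewrite /u eqxx.
  by move=> j /negbTE hj; rewrite /u hj.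
have Hlow : forall k : 'I_n, (k < i)%N -> Rl u k = 0.
  by move=> k hk; rewrite -(UI _ _ inD0 Hu i Hinc k hk) Rl_zero.
have Hhigh : forall k : 'I_n, (i <= k)%N -> Rl u k = Rl u i.
  move=> k hk; case: (ltnP i n.-1) => hin.
    have hl : (i.+1 < n)%N by lia.
    pose l := Ordinal hl.
    have D : forall k : 'I_n, (i < k)%N -> Rl u k = Rl u l.
      move=> k' hk'.
      have := DI _ _ inD0 Hu i Hinc k' l hk' (ltnSn _).
      move=> /(_ erefl).
      by rewrite !Rl_zero !subr0.
    have cp' : 0 < u i by rewrite /u eqxx.
    have Hb := BAL u Hu i hin cp' (fun j (hj : j != i) => (ltac:(by rewrite /u (negbTE hj)) : u j = 0)).
    have Hb' : Rl u i = Rl u l.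
      rewrite Hb.
      have -> : \sum_(k0 < n | (i < k0)%N) Rl u k0 = \sum_(k0 < n | (i.+1 <= k0)%N) Rl u l.
        by apply: eq_big => // k0 hk0; apply: D.
      rewrite cnt ?hl // -[Rl u l *+ _]mulr_natr mulrC mulfK //.
      rewrite pnatr_eq0 subn_eq0 -ltnNge //.
    case: (ltnP i k) => hik; first by rewrite D // Hb'.
    by rewrite (@ord_eq i k hik) // -leqNgt.
  have -> : k = i by apply: val_inj => /=; have := ltn_ord k; lia.
  by [].
have [_ [Hs _]] := hR u Hu.
rewrite sum_single (split_sum _ i) big1 // add0r in Hs.
have E : \sum_(k < n | (i <= k)%N) Rl u k = \sum_(k < n | (i <= k)%N) Rl u i.
  by apply: eq_bigr => k hk; apply: Hhigh.
rewrite E cnt -?[Rl u i *+ _]mulr_natr in Hs; last by apply: ltnW.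
by rewrite -Hs mulfK // natr_sub_neq0.
Qed.

Lemma core (i : 'I_n)
  (IH : forall k : 'I_n, (k < i)%N -> forall e, inD e -> Rl e k = shapley e k)
  (e : profile R n) (He : inD e) : Rl e i = shapley e i.
Proof.
set c := e i.
set h : profile R n := fun j => if (j < i)%N then e j else c.
set h0 : profile R n := fun j => if (j < i)%N then 0 else c.
have Hh : inD h by move=> j; rewrite /h /=; case: ifP => _; apply: He.
have Hh0 : inD h0 by move=> j; rewrite /h0 /=; case: ifP => _ //; apply: He.
have S1 : Rl e i = Rl h i.
  apply: (@lemA e h i He Hh) => // j hj; rewrite /h; case: ifP => // /negbT hj'.
  by rewrite (@ord_eq _ _ hj hj').
have S2 : Rl h0 i = c / (n - i)%:R.
  rewrite -(@single c i (He i)).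
  apply: (@lemA h0 (fun j => if j == i then c else 0) i Hh0) => //.
    by move=> j; case: ifP => _ //; apply: He.
  move=> j hj; rewrite /h0; case: ifP => [hji|/negbT hj'].
    by rewrite ifN //; apply/negP => /eqP E; rewrite E ltnn in hji.
  by rewrite (@ord_eq _ _ hj hj') eqxx.
have S4 : forall k : 'I_n, (i <= k)%N -> Rl h k - Rl h0 k = Rl h i - Rl h0 i.
  move=> k hk; apply: (@lemB h0 h i Hh0 Hh) => //.
    by move=> j hj; rewrite /h /h0 ltnNge hj.
  by move=> k' l hk' hl; rewrite /h0 ltnNge hk' ltnNge hl.
have S5 : forall k : 'I_n, (k < i)%N -> Rl h0 k = 0.
  move=> k hk; rewrite IH // /shapley big1 // => j hj.
  by rewrite /h0 (leq_ltn_trans hj hk) mul0r.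
have S6 : forall k : 'I_n, (k < i)%N -> Rl h k = shapley e k.
  move=> k hk; rewrite IH // /shapley; apply: eq_bigr => j hj.
  by rewrite /h (leq_ltn_trans hj hk).
have [_ [Sh _]] := hR h Hh.
have [_ [Sh0 _]] := hR h0 Hh0.
set d := Rl h i - Rl h0 i.
have Ediff : \sum_(k < n | (k < i)%N) e k =
    \sum_(k < n | (k < i)%N) shapley e k + d *+ (n - i).
  have : \sum_(k < n) Rl h k - \sum_(k < n) Rl h0 k = \sum_(k < n) h k - \sum_(k < n) h0 k
    by rewrite Sh Sh0.
  rewrite -!sumrB (split_sum _ i) (split_sum (fun k => h k - h0 k) i).
  have -> : \sum_(k < n | (i <= k)%N) (h k - h0 k) = 0.
    by rewrite big1 // => k hk; rewrite /h /h0 ltnNge hk subrr.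
  have -> : \sum_(k < n | (k < i)%N) (h k - h0 k) = \sum_(k < n | (k < i)%N) e k.
    by apply: eq_bigr => k hk; rewrite /h /h0 hk subr0.
  have -> : \sum_(k < n | (k < i)%N) (Rl h k - Rl h0 k) = \sum_(k < n | (k < i)%N) shapley e k.
    by apply: eq_bigr => k hk; rewrite S5 // S6 // subr0.
  have -> : \sum_(k < n | (i <= k)%N) (Rl h k - Rl h0 k) = \sum_(k < n | (i <= k)%N) d.
    by apply: eq_bigr => k hk; rewrite S4.
  by rewrite cnt ?addr0 // ltnW.
have Eid := ident e i (ltn_ord i).
have Hi : Ordinal (ltn_ord i) = i by apply: val_inj.
rewrite Hi (split_le e i) in Eid.
rewrite -[d *+ _]mulr_natr in Ediff.
have mne : (n - i)%:R != 0 :> R := natr_sub_neq0 i.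
set m := (n - i)%:R in Ediff Eid mne S2.
have Hd : d * m = Rl h i * m - c by rewrite /d S2 mulrBl divfK.
rewrite Hd in Ediff.
rewrite S1; apply: (mulIf mne).
rewrite [shapley e i * m]mulrC.
fold c in Eid.
lra.
Qed.

Lemma forward_all : forall i (k : 'I_n), (k <= i)%N -> forall e, inD e -> Rl e k = shapley e k.
Proof.
elim=> [|i IH] k hk e He.
  apply: core => // k' hk'; exfalso; move: hk' hk; lia.
case: (leqP k i) => hki; first exact: IH.
apply: core => // k' hk'; apply: IH; lia.
Qed.

End Forward.

Section Backward.
Variables (R : realType) (n : nat).

Lemma shap_diff (e e' : profile R n) (i k : 'I_n) :
  (forall j, j != i -> e j = e' j) -> (i <= k)%N ->
  shapley e' k - shapley e k = (e' i - e i) / (n - i)%:R.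
Proof.
move=> hj hk; rewrite /shapley -sumrB (bigD1 i) //= big1 ?addr0 ?mulrBl //.
move=> j /andP[_ hji]; by rewrite hj // subrr.
Qed.

Lemma shap_single (e : profile R n) (i k : 'I_n) :
  (forall j, j != i -> e j = 0) -> (i <= k)%N -> shapley e k = e i / (n - i)%:R.
Proof.
move=> hz hk; rewrite /shapley (bigD1 i) //= big1 ?addr0 //.
by move=> j /andP[_ hji]; rewrite hz // mul0r.
Qed.

Lemma backward (Rl : profile R n -> profile R n)
  (H : forall e, inD e -> forall i, Rl e i = shapley e i) :
  scale_invariance Rl /\ downstream_impartiality Rl /\
  upstream_invariance Rl /\ balance Rl.
Proof.
split; [|split; [|split]].
- move=> e He g hg i.
  have Hg : inD (fun j => g * e j) by move=> j; apply: mulr_ge0.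
  rewrite !H // /shapley mulr_sumr; apply: eq_bigr => j _; by rewrite mulrA.
- move=> e e' He He' i [hlt hj] k l hk hl hkl.
  by rewrite !H // (shap_diff _ _ _ _ hj (ltnW hk)) (shap_diff _ _ _ _ hj (ltnW hl)).
- move=> e e' He He' i [hlt hj] k hk.
  rewrite !H // /shapley; apply: eq_bigr => j hjk; rewrite hj //.
  by apply/negP => /eqP E; move: hjk hk; rewrite E; lia.
- move=> e He i hin hpos hz.
  rewrite !H // (shap_single _ _ _ hz (leqnn _)).
  have -> : \sum_(k < n | (i < k)%N) Rl e k = \sum_(k < n | (i.+1 <= k)%N) (e i / (n - i)%:R).
    apply: eq_bigr => k hk; rewrite H // (shap_single _ _ _ hz (ltnW hk)).
  1: done.
  have hm : (n - i.+1)%:R != 0 :> R by rewrite pnatr_eq0 subn_eq0 -ltnNge; lia.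
  rewrite cnt; last by lia.
  set x := e i / _.
  by rewrite -(mulr_natr x) mulrC mulfK.
Qed.

End Backward.

Theorem theorem1 (R : realType) (n : nat) (hn : (2 <= n)%N)
  (Rl : profile R n -> profile R n) (hR : is_rule Rl) :
  (scale_invariance Rl /\ downstream_impartiality Rl /\
   upstream_invariance Rl /\ balance Rl)
  <-> (forall e, inD e -> forall i, Rl e i = shapley e i).
Proof.
split; last exact: backward.
move=> [_ [DI [UI BAL]]] e He i.
exact: (@forward_all R n Rl hR UI DI BAL i i (leqnn _) e He).
Qed.
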